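(* Let $n\geq1$ and let $F$ be a joint distribution of nonnegative lifetimes $X_1,\ldots,X_n$ with no ties. The following are equivalent: (a) $I_{\mathrm{BP}}^{(j)}=b_j$ for every $j\in[n]$ and every coherent structure function $\phi\in\Phi_n$; (b) the same for every semicoherent $\phi\in\Phi'_n$; (c) $q_j(A)=\frac{1}{n\binom{n-1}{|A|}}$ for every $j\in[n]$ and every $A\subseteq[n]\setminus\{j\}$.
   Context: Subsets of $[n]$ are identified with Boolean vectors. $\Phi'_n$ is the set of semicoherent structure functions $\phi:2^{[n]}\to\{0,1\}$: nondecreasing with $\phi(\varnothing)=0$, $\phi([n])=1$. $\Phi_n\subseteq\Phi'_n$ is the set of coherent ones: every variable is essential, i.e., for each $j$ there is $\mathbf{x}$ with $\phi(\mathbf{x})|_{x_j=0}\neq\phi(\mathbf{x})|_{x_j=1}$. No ties: $\Pr(X_i=X_k)=0$ for $i\neq k$. System lifetime $T=\inf\{t\geq0:\phi(\{i:X_i>t\})=0\}$; $I_{\mathrm{BP}}^{(j)}=\Pr(T=X_j)$ (depending on $\phi$ and $F$). $b_j=\sum_{A\subseteq[n]\setminus\{j\}}\frac{1}{n\binom{n-1}{|A|}}(\phi(A\cup\{j\})-\phi(A))$. $q_j(A)=\Pr\big(\max_{i\notin A\cup\{j\}}X_i<X_j<\min_{i\in A}X_i\big)$ (empty max $=-\infty$, empty min $=+\infty$). *)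

(* Defs.v *)
From mathcomp Require Import all_boot.
From Stdlib Require Import Reals.
Set Implicit Arguments. Unset Strict Implicit. Unset Printing Implicit Defensive.

Local Open Scope R_scope.

Record ProbSpace := {
  ps_carrier :> Type;
  ps_meas : (ps_carrier -> Prop) -> Prop;
  ps_P : (ps_carrier -> Prop) -> R;
  ps_meas_full : ps_meas (fun _ => True);
  ps_meas_compl : forall A, ps_meas A -> ps_meas (fun w => ~ A w);
  ps_meas_cunion : forall A : nat -> ps_carrier -> Prop,
      (forall k, ps_meas (A k)) -> ps_meas (fun w => exists k, A k w);
  ps_P_nonneg : forall A, ps_meas A -> 0 <= ps_P A;
  ps_P_full : ps_P (fun _ => True) = 1;
  ps_P_cadd : forall A : nat -> ps_carrier -> Prop,
      (forall k, ps_meas (A k)) ->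
      (forall k l, k <> l -> forall w, A k w -> A l w -> False) ->
      infinite_sum (fun k => ps_P (A k)) (ps_P (fun w => exists k, A k w))
}.

Definition Rltb (a b : R) : bool := if Rlt_dec a b then true else false.

Definition nondecreasing_sf n (phi : {set 'I_n} -> bool) : Prop :=
  forall A B : {set 'I_n}, A \subset B -> (phi A ==> phi B).

Definition semicoherent n (phi : {set 'I_n} -> bool) : Prop :=
  nondecreasing_sf phi /\ phi set0 = false /\ phi setT = true.

Definition coherent n (phi : {set 'I_n} -> bool) : Prop :=
  semicoherent phi /\
  forall j : 'I_n, exists A : {set 'I_n}, phi (A :\ j) <> phi (j |: A).

Definition is_inf (S : R -> Prop) (s : R) : Prop :=
  (forall y, S y -> s <= y) /\ (forall z, (forall y, S y -> z <= y) -> z <= s).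

Definition lifetime_is n (phi : {set 'I_n} -> bool) (x : 'I_n -> R) (s : R) : Prop :=
  is_inf (fun t => 0 <= t /\ phi [set i | Rltb t (x i)] = false) s.

Definition I_BP (Om : ProbSpace) n (X : 'I_n -> Om -> R)
    (phi : {set 'I_n} -> bool) (j : 'I_n) : R :=
  @ps_P Om (fun w => lifetime_is phi (fun i => X i w) (X j w)).

Definition sweight n (A : {set 'I_n}) : R :=
  / (INR n * INR 'C(n.-1, #|A|)).

Definition shapley n (phi : {set 'I_n} -> bool) (j : 'I_n) : R :=
  \big[Rplus/0]_(A : {set 'I_n} | j \notin A)
     (sweight A * (INR (phi (j |: A)) - INR (phi A))).

Definition q_prob (Om : ProbSpace) n (X : 'I_n -> Om -> R)
    (j : 'I_n) (A : {set 'I_n}) : R :=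
  @ps_P Om (fun w =>
    (forall i : 'I_n, i \notin A -> i <> j -> X i w < X j w) /\
    (forall i : 'I_n, i \in A -> X j w < X i w)).

(* Main.v *)
From HB Require Import structures.
Require Import Defs.
From mathcomp Require Import all_boot.
From Stdlib Require Import Reals.
From Stdlib Require Import Lra Lia FunctionalExtensionality PropExtensionality Classical.
Set Implicit Arguments. Unset Strict Implicit. Unset Printing Implicit Defensive.
Local Open Scope R_scope.

Lemma set_ext (T : Type) (A B : T -> Prop) : (forall w, A w <-> B w) -> A = B.
Proof. move=> H; apply: functional_extensionality => w; apply: propositional_extensionality; exact: H. Qed.

Lemma meas_ext (Om : ProbSpace) (A B : Om -> Prop) :
  ps_meas A -> (forall w, A w <-> B w) -> ps_meas B.
Proof. by move=> HA /set_ext <-. Qed.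

Lemma P_ext (Om : ProbSpace) (A B : Om -> Prop) :
  (forall w, A w <-> B w) -> ps_P A = ps_P B.
Proof. by move=> /set_ext ->. Qed.

Lemma meas_empty (Om : ProbSpace) : @ps_meas Om (fun _ => False).
Proof.
apply: meas_ext (ps_meas_compl (ps_meas_full Om)) _ => w; tauto.
Qed.

Lemma meas_union (Om : ProbSpace) (A B : Om -> Prop) :
  ps_meas A -> ps_meas B -> ps_meas (fun w => A w \/ B w).
Proof.
move=> HA HB.
pose S (k : nat) := if k is 0%N then A else B.
have HS : forall k, ps_meas (S k) by case.
apply: meas_ext (ps_meas_cunion HS) _ => w; split.
- by case=> [[|k]] /=; [left|right].
- by case=> H; [exists O | exists 1%nat].
Qed.

Lemma meas_inter (Om : ProbSpace) (A B : Om -> Prop) :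
  ps_meas A -> ps_meas B -> ps_meas (fun w => A w /\ B w).
Proof.
move=> HA HB.
apply: meas_ext (ps_meas_compl (meas_union (ps_meas_compl HA) (ps_meas_compl HB))) _.
move=> w; tauto.
Qed.

Lemma meas_compl (Om : ProbSpace) (A : Om -> Prop) :
  ps_meas A -> ps_meas (fun w => ~ A w).
Proof. exact: ps_meas_compl. Qed.

Lemma sum_const_inf (c : R) : 0 <= c -> infinite_sum (fun _ => c) c -> c = 0.
Proof.
move=> c0 H.
have Hs : forall N, sum_f_R0 (fun _ : nat => c) N = INR (S N) * c.
  elim=> [|N IH] /=; first lra. rewrite IH; destruct N; simpl; lra.
destruct (Req_dec c 0) as [|Hc]; first done.
exfalso.
have cpos : 0 < c by lra.
have [N HN] := H c cpos.
have HN1 := HN (S N) (le_S _ _ (Nat.le_refl _)).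
rewrite /R_dist Hs in HN1.
replace (INR (S (S N)) * c - c) with (INR (S N) * c) in HN1
  by (rewrite [INR (S (S N))]S_INR; ring).
rewrite Rabs_right in HN1.
  have := pos_INR N; have := S_INR N; nra.
apply: Rle_ge; apply: Rmult_le_pos => //; exact: pos_INR.
Qed.

Lemma P_empty (Om : ProbSpace) : @ps_P Om (fun _ => False) = 0.
Proof.
have H := @ps_P_cadd Om (fun _ _ => False) (fun _ => meas_empty Om) (fun _ _ _ _ f _ => f).
have E : (fun w : Om => exists _ : nat, False) = (fun _ => False).
  by apply: set_ext => w; split => // [[]].
rewrite E in H.
apply: sum_const_inf H; exact: ps_P_nonneg (meas_empty Om).
Qed.

Lemma P_add2 (Om : ProbSpace) (A B : Om -> Prop) :
  ps_meas A -> ps_meas B -> (forall w, A w -> B w -> False) ->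
  ps_P (fun w => A w \/ B w) = ps_P A + ps_P B.
Proof.
move=> HA HB D.
pose S (k : nat) := match k with O => A | 1%nat => B | _ => fun _ : Om => False end.
have HS : forall k, ps_meas (S k) by case=> [|[|k]] //; exact: meas_empty.
have HD : forall k l, k <> l -> forall w, S k w -> S l w -> False.
  move=> k l Hkl w; destruct k as [|[|k]]; destruct l as [|[|l]]; simpl; try tauto;
  try (by move=> a b; apply: (D w a b)); try (by move=> a b; apply: (D w b a)).
have H1 := ps_P_cadd HS HD.
have E : (fun w => exists k, S k w) = (fun w => A w \/ B w).
  apply: set_ext => w; split.
  - by case=> [[|[|k]]] /=; tauto.
  - by case=> H; [exists O | exists 1%nat].
rewrite E in H1.
apply: (uniqueness_sum _ _ _ H1).
move=> eps Heps; exists 1%nat => N HN.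
have -> : sum_f_R0 (fun k => ps_P (S k)) N = ps_P A + ps_P B.
  elim: N HN => [|N IH] HN; first lia.
  destruct N as [|N]; first by rewrite /= /S.
  rewrite /= in IH *. rewrite IH; last lia. rewrite P_empty; ring.
rewrite /R_dist Rminus_diag Rabs_R0; lra.
Qed.

Lemma P_mono (Om : ProbSpace) (A B : Om -> Prop) :
  ps_meas A -> ps_meas B -> (forall w, A w -> B w) -> ps_P A <= ps_P B.
Proof.
move=> HA HB Hsub.
have E : ps_P B = ps_P (fun w => A w \/ (B w /\ ~ A w)).
  apply: P_ext => w; split; first by move=> Hb; case: (classic (A w)); tauto.
  case; [exact: Hsub | tauto].
rewrite E P_add2 //; last by move=> w ? [].
- have := ps_P_nonneg (meas_inter HB (meas_compl HA)); lra.
- exact: meas_inter HB (meas_compl HA).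
Qed.

Lemma P_sub2 (Om : ProbSpace) (A B : Om -> Prop) :
  ps_meas A -> ps_meas B -> ps_P (fun w => A w \/ B w) <= ps_P A + ps_P B.
Proof.
move=> HA HB.
have E : ps_P (fun w => A w \/ B w) = ps_P (fun w => A w \/ (B w /\ ~ A w)).
  apply: P_ext => w; case: (classic (A w)); tauto.
rewrite E P_add2 //; last by move=> w ? [].
- have := P_mono (meas_inter HB (meas_compl HA)) HB (fun w (H : B w /\ ~ A w) => proj1 H); lra.
- exact: meas_inter HB (meas_compl HA).
Qed.

Lemma meas_list (Om : ProbSpace) (T : Type) (s : seq T) (e : T -> Om -> Prop) :
  (forall t, ps_meas (e t)) -> ps_meas (fun w => exists t, List.In t s /\ e t w).
Proof.
move=> He; elim: s => [|t s IH].
  apply: meas_ext (meas_empty Om) _ => w; split => // [[x []]] //.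
apply: meas_ext (meas_union (He t) IH) _ => w; split.
- case=> [H|[x [Hx H]]]; [exists t | exists x]; simpl; tauto.
- case=> x [[<-|Hx] H]; [left | right; exists x]; tauto.
Qed.

Lemma meas_list_all (Om : ProbSpace) (T : Type) (s : seq T) (e : T -> Om -> Prop) :
  (forall t, ps_meas (e t)) -> ps_meas (fun w => forall t, List.In t s -> e t w).
Proof.
move=> He.
have H := meas_compl (meas_list s (fun t => meas_compl (He t))).
apply: meas_ext H _ => w; split.
- move=> H t Ht; apply: NNPP => Hn; apply: H; exists t; tauto.
- move=> H [t [Ht Hn]]; exact: Hn (H t Ht).
Qed.

Lemma In_mem (T : eqType) (x : T) (s : seq T) : List.In x s <-> x \in s.
Proof.
elim: s => [|y s IH] //=; rewrite in_cons; split.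
- by case=> [->|/IH ->]; rewrite ?eqxx ?orbT.
- by case/orP => [/eqP ->|/IH]; [left|right].
Qed.

Lemma P_list_add (Om : ProbSpace) (T : eqType) (s : seq T) (e : T -> Om -> Prop) :
  uniq s -> (forall t, ps_meas (e t)) ->
  (forall t t' w, t <> t' -> e t w -> e t' w -> False) ->
  ps_P (fun w => exists t, List.In t s /\ e t w) = \big[Rplus/0]_(t <- s) ps_P (e t).
Proof.
move=> Hu He Hd; elim: s Hu => [|t s IH] /=.
  move=> _; rewrite big_nil -(P_empty Om); apply: P_ext => w; split => // [[x []]] //.
case/andP => Hts Hu.
rewrite big_cons -IH //.
rewrite -P_add2 //; last 2 first.
- exact: meas_list.
- move=> w H1 [x [Hx H2]]; apply: (Hd t x w) => // Htx.
  by move: Hts; rewrite Htx; move/In_mem: Hx => ->.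
apply: P_ext => w; split.
- case=> x [[<-|Hx] H]; [left | right; exists x]; tauto.
- case=> [H|[x [Hx H]]]; [exists t | exists x]; simpl; tauto.
Qed.

Lemma P_list_null (Om : ProbSpace) (T : Type) (s : seq T) (e : T -> Om -> Prop) :
  (forall t, ps_meas (e t)) -> (forall t, ps_P (e t) = 0) ->
  ps_P (fun w => exists t, List.In t s /\ e t w) = 0.
Proof.
move=> He H0; elim: s => [|t s IH].
  rewrite -(P_empty Om); apply: P_ext => w; split => // [[x []]] //.
apply: Rle_antisym; last exact: ps_P_nonneg (meas_list _ He).
have E : ps_P (fun w => exists x, List.In x (t :: s) /\ e x w) =
         ps_P (fun w => e t w \/ exists x, List.In x s /\ e x w).
  apply: P_ext => w; split.
  - case=> x [[<-|Hx] H]; [left | right; exists x]; tauto.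
  - case=> [H|[x [Hx H]]]; [exists t | exists x]; simpl; tauto.
rewrite E; apply: Rle_trans (P_sub2 (He t) (meas_list s He)) _.
rewrite IH H0; lra.
Qed.

Definition qq (k1 k2 k3 : nat) : R := (INR k1 - INR k2) / INR (S k3).

Lemma IZR_split (z : Z) : IZR z = INR (Z.to_nat z) - INR (Z.to_nat (- z)).
Proof.
rewrite !INR_IZR_INZ.
destruct z as [|p|p].
- simpl; lra.
- have -> : (- Z.pos p)%Z = Z.neg p by [].
  rewrite Znat.Z2Nat.inj_pos Znat.positive_nat_Z /=; lra.
- have -> : (- Z.neg p)%Z = Z.pos p by [].
  rewrite Znat.Z2Nat.inj_pos Znat.positive_nat_Z /=.
  have -> : Z.neg p = (- Z.pos p)%Z by []. rewrite opp_IZR; lra.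
Qed.

Lemma dense_q (x y : R) : x < y -> exists k1 k2 k3, x <= qq k1 k2 k3 /\ qq k1 k2 k3 < y.
Proof.
move=> Hxy.
have [k3 Hk3] : exists k3 : nat, / (y - x) < INR (S k3).
  have [H1 _] := archimed (/ (y - x)).
  exists (Z.to_nat (up (/ (y - x)))).
  rewrite S_INR INR_IZR_INZ.
  have Hp : 0 < / (y - x) by apply: Rinv_0_lt_compat; lra.
  rewrite Znat.Z2Nat.id; first lra.
  apply: le_IZR; lra.
set c := INR (S k3) in Hk3 *.
have cpos : 0 < c by rewrite /c; apply: lt_0_INR; lia.
have Hc : 1 < c * (y - x).
  have := Rmult_lt_compat_r (y - x) _ _ (ltac:(lra) : 0 < y - x) Hk3.
  rewrite Rinv_l; lra.
have [H1 H2] := archimed (x * c).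
set z := up (x * c) in H1 H2.
exists (Z.to_nat z), (Z.to_nat (- z)), k3.
rewrite /qq -IZR_split -/c.
split.
- apply: (Rmult_le_reg_r _ _ _ cpos). rewrite /Rdiv Rmult_assoc Rinv_l; lra.
- apply: (Rmult_lt_reg_r _ _ _ cpos). rewrite /Rdiv Rmult_assoc Rinv_l; lra.
Qed.

Lemma meas_lt_fun (Om : ProbSpace) (f g : Om -> R) :
  (forall t, ps_meas (fun w => f w <= t)) -> (forall t, ps_meas (fun w => g w <= t)) ->
  ps_meas (fun w => f w < g w).
Proof.
move=> Hf Hg.
have H : ps_meas (fun w => exists k1, exists k2, exists k3,
            f w <= qq k1 k2 k3 /\ ~ (g w <= qq k1 k2 k3)).
  do 3 (apply: ps_meas_cunion => ?).
  apply: meas_inter; [exact: Hf | exact: ps_meas_compl].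
apply: meas_ext H _ => w; split.
- case=> k1 [k2 [k3 [H1 H2]]]; lra.
- move=> /dense_q [k1 [k2 [k3 [H1 H2]]]]; exists k1, k2, k3; lra.
Qed.

Lemma RltbP (a b : R) : reflect (a < b) (Rltb a b).
Proof. rewrite /Rltb; case: Rlt_dec => H; by constructor. Qed.

Definition cmpv (Om : ProbSpace) n (X : 'I_n -> Om -> R) (w : Om) : {ffun 'I_n * 'I_n -> bool} :=
  [ffun p => Rltb (X p.1 w) (X p.2 w)].

Lemma meas_const (Om : ProbSpace) (b : bool) : @ps_meas Om (fun _ => b).
Proof.
case: b; [apply: meas_ext (ps_meas_full Om) _ | apply: meas_ext (meas_empty Om) _] => w //.
Qed.

Lemma In_enum (T : finType) (x : T) : List.In x (enum (@predT T)).
Proof. by apply/In_mem; rewrite mem_enum. Qed.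

Lemma meas_F (Om : ProbSpace) n (X : 'I_n -> Om -> R)
  (Hmeas : forall (i : 'I_n) (t : R), @ps_meas Om (fun w => (X i w <= t)%R))
  (F : {ffun 'I_n * 'I_n -> bool} -> bool) :
  ps_meas (fun w => F (cmpv X w)).
Proof.
have Hat : forall (g : {ffun 'I_n * 'I_n -> bool}) (p : 'I_n * 'I_n),
    ps_meas (fun w => Rltb (X p.1 w) (X p.2 w) = g p).
  move=> g p; case: (g p).
  - apply: meas_ext (meas_lt_fun (Hmeas p.1) (Hmeas p.2)) _ => w.
    by split; [move/RltbP | move/RltbP].
  - apply: meas_ext (meas_compl (meas_lt_fun (Hmeas p.1) (Hmeas p.2))) _ => w.
    split; [by move/RltbP/negbTE | by move=> H /RltbP; rewrite H].
have H := meas_list (enum (@predT {ffun 'I_n * 'I_n -> bool}))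
   (fun g => meas_inter (meas_const Om (F g)) (meas_list_all (enum (@predT ('I_n * 'I_n))) (Hat g))).
apply: meas_ext H _ => w; split.
- case=> g [_ [Hg Hp]].
  suff -> : cmpv X w = g by [].
  apply/ffunP => p; rewrite ffunE; exact: Hp _ (In_enum p).
- move=> H; exists (cmpv X w); split; first exact: In_enum.
  split => // p _; by rewrite ffunE.
Qed.

Lemma gap_above (I : Type) (s : seq I) (x : I -> R) (t0 : R) :
  exists m, t0 < m /\ forall i, List.In i s -> t0 < x i -> m <= x i.
Proof.
elim: s => [|a s [m [Hm H]]]; first by exists (t0 + 1); split => //; lra.
case: (Rlt_dec t0 (x a)) => Ha.
- exists (Rmin m (x a)); split; first by apply: Rmin_glb_lt.
  move=> i [<-|Hi] Hti; first exact: Rmin_r.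
  apply: Rle_trans (Rmin_l _ _) (H i Hi Hti).
- exists m; split => // i [<-|Hi] Hti; [done | exact: H].
Qed.

Lemma gap_below (I : Type) (s : seq I) (x : I -> R) (t0 : R) : 0 < t0 ->
  exists m, 0 <= m /\ m < t0 /\ forall i, List.In i s -> x i < t0 -> x i <= m.
Proof.
move=> Ht0; elim: s => [|a s [m [Hm0 [Hm H]]]]; first by exists 0; split => //; lra.
case: (Rlt_dec (x a) t0) => Ha.
- exists (Rmax m (x a)); split; first by apply: Rle_trans Hm0 (Rmax_l _ _).
  split; first by apply: Rmax_lub_lt.
  move=> i [<-|Hi] Hti; first exact: Rmax_r.
  apply: Rle_trans (H i Hi Hti) (Rmax_l _ _).
- exists m; split => //; split => // i [<-|Hi] Hti; [done | exact: H].
Qed.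

Lemma lifetime_char n (phi : {set 'I_n} -> bool) (Hs : semicoherent phi)
  (x : 'I_n -> R) (Hx : forall i, 0 <= x i) (j : 'I_n) :
  lifetime_is phi x (x j) <->
  (phi [set i | ~~ Rltb (x i) (x j)] && ~~ phi [set i | Rltb (x j) (x i)]).
Proof.
case: Hs => Hmono [Hphi0 HphiT].
have mono : forall A B : {set 'I_n}, A \subset B -> phi A -> phi B.
  by move=> A B /Hmono /implyP.
split.
- case=> Hlb Hgl.
  apply/andP; split.
  + apply: NNPP => /negP /negbTE HG.
    case: (Rle_lt_or_eq_dec 0 (x j) (Hx j)) => Hxj.
    * have [m [Hm0 [Hm H]]] := gap_below (enum (@predT 'I_n)) x Hxj.
      pose y := (m + x j) / 2.
      have Hy : 0 <= y /\ phi [set i | Rltb y (x i)] = false.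
        split; first by rewrite /y; lra.
        apply: negbTE; apply/negP => Hp.
        suff : phi [set i | ~~ Rltb (x i) (x j)] by rewrite HG.
        apply: mono Hp; apply/subsetP => i; rewrite !inE => /RltbP Hyi; apply/negP => /RltbP Hij.
        have := H i (In_enum i) Hij; rewrite /y in Hyi; lra.
      have := Hlb y Hy; rewrite /y; lra.
    * have E : [set i | ~~ Rltb (x i) (x j)] = [set: 'I_n].
        apply/setP => i; rewrite !inE;
        apply/negP => /RltbP; have := Hx i; lra.
      by rewrite E HphiT in HG.
  + apply/negP => HH.
    have [m [Hm H]] := gap_above (enum (@predT 'I_n)) x (x j).
    suff : m <= x j by lra.
    apply: Hgl => y [Hy0 Hy].
    have Hjy := Hlb y (conj Hy0 Hy).
    apply: Rnot_lt_le => Hym.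
    have : phi [set i | Rltb y (x i)].
      apply: mono HH; apply/subsetP => i; rewrite !inE => /RltbP Hji; apply/RltbP.
      have := H i (In_enum i) Hji; lra.
    by rewrite Hy.
- case/andP => HG HH; split.
  + move=> y [Hy0 Hy]; apply: Rnot_lt_le => Hyj.
    have : phi [set i | Rltb y (x i)].
      apply: mono HG; apply/subsetP => i; rewrite !inE => /RltbP Hij; apply/RltbP; lra.
    by rewrite Hy.
  + move=> z Hz; apply: Hz; split; first exact: Hx.
    exact: negbTE.
Qed.

Definition Qev (Om : ProbSpace) n (X : 'I_n -> Om -> R) (j : 'I_n) (A : {set 'I_n}) (w : Om) : Prop :=
  (forall i : 'I_n, i \notin A -> i <> j -> X i w < X j w) /\
  (forall i : 'I_n, i \in A -> X j w < X i w).

Lemma Qev_meas (Om : ProbSpace) n (X : 'I_n -> Om -> R)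
  (Hmeas : forall (i : 'I_n) (t : R), @ps_meas Om (fun w => (X i w <= t)%R)) j A :
  ps_meas (Qev X j A).
Proof.
apply: meas_ext (meas_F Hmeas (fun g => [forall i, ((i \notin A) && (i != j)) ==> g (i, j)]
                                  && [forall i, (i \in A) ==> g (j, i)])) _ => w.
split.
- case/andP => /forallP H1 /forallP H2; split.
  + move=> i Hi Hij; have := H1 i; rewrite Hi /= ffunE /=.
    by move/eqP: Hij => -> /RltbP.
  + by move=> i Hi; have := H2 i; rewrite Hi /= ffunE /= => /RltbP.
- case=> H1 H2; apply/andP; split; apply/forallP => i; apply/implyP.
  + case/andP => Hi /eqP Hij; rewrite ffunE /=; apply/RltbP; exact: H1.
  + move=> Hi; rewrite ffunE /=; apply/RltbP; exact: H2.
Qed.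

Lemma Qev_disj (Om : ProbSpace) n (X : 'I_n -> Om -> R) j (A B : {set 'I_n}) w :
  A <> B -> Qev X j A w -> Qev X j B w -> False.
Proof.
move=> HAB [HA1 HA2] [HB1 HB2].
apply: HAB; apply/setP => i.
case: (eqVneq i j) => [->|Hij].
  case HjA: (j \in A); first by have := HA2 j HjA; lra.
  case HjB: (j \in B) => //; by have := HB2 j HjB; lra.
have Hij' : i <> j by apply/eqP.
case HiA: (i \in A); case HiB: (i \in B) => //.
- have := HA2 i HiA; have := HB1 i (negbT HiB) Hij'; lra.
- have := HB2 i HiB; have := HA1 i (negbT HiA) Hij'; lra.
Qed.

Definition ties_ev (Om : ProbSpace) n (X : 'I_n -> Om -> R) (w : Om) : Prop :=
  exists p, List.In p (enum (@predT ('I_n * 'I_n))) /\ (p.1 <> p.2 /\ X p.1 w = X p.2 w).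

Lemma tie_meas (Om : ProbSpace) n (X : 'I_n -> Om -> R)
  (Hmeas : forall (i : 'I_n) (t : R), @ps_meas Om (fun w => (X i w <= t)%R)) (p : 'I_n * 'I_n) :
  ps_meas (fun w => p.1 <> p.2 /\ X p.1 w = X p.2 w).
Proof.
apply: meas_ext (meas_F Hmeas (fun g => (p.1 != p.2) && ~~ g p && ~~ g (p.2, p.1))) _ => w.
rewrite !ffunE /=; split.
- case/andP => /andP [/eqP H1 /RltbP H2] /RltbP H3; split => //; lra.
- case=> H1 H2; apply/andP; split; first (apply/andP; split).
  + exact/eqP.
  + apply/RltbP; lra.
  + apply/RltbP; lra.
Qed.

Lemma ties_null (Om : ProbSpace) n (X : 'I_n -> Om -> R)
  (Hmeas : forall (i : 'I_n) (t : R), @ps_meas Om (fun w => (X i w <= t)%R))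
  (Hnoties : forall i k : 'I_n, i <> k -> @ps_P Om (fun w => X i w = X k w) = 0%R) :
  ps_P (ties_ev X) = 0 /\ ps_meas (ties_ev X).
Proof.
split; last exact: meas_list _ (tie_meas Hmeas).
apply: P_list_null; first exact: tie_meas Hmeas.
move=> [a b] /=; case: (eqVneq a b) => [<-|Hab].
- rewrite -(P_empty Om); apply: P_ext => w; tauto.
- have Hab' : a <> b by apply/eqP.
  rewrite -(Hnoties a b Hab'); apply: P_ext => w; split; first tauto.
  by move=> H; split.
Qed.

Definition Lset n (phi : {set 'I_n} -> bool) (j : 'I_n) : seq {set 'I_n} :=
  [seq A : {set 'I_n} <- enum (@predT {set 'I_n}) | (j \notin A) && phi (j |: A) && ~~ phi A].

Lemma key (Om : ProbSpace) n (X : 'I_n -> Om -> R)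
  (Hmeas : forall (i : 'I_n) (t : R), @ps_meas Om (fun w => (X i w <= t)%R))
  (Hnonneg : forall (i : 'I_n) (w : Om), (0 <= X i w)%R)
  (Hnoties : forall i k : 'I_n, i <> k -> @ps_P Om (fun w => X i w = X k w) = 0%R)
  (phi : {set 'I_n} -> bool) (Hs : semicoherent phi) (j : 'I_n) :
  I_BP X phi j = \big[Rplus/0]_(A <- Lset phi j) q_prob X j A.
Proof.
set E := fun w => lifetime_is phi (fun i => X i w) (X j w).
have HE : forall w, E w <-> (phi [set i | ~~ Rltb (X i w) (X j w)] &&
                             ~~ phi [set i | Rltb (X j w) (X i w)]).
  move=> w; exact: (lifetime_char Hs (fun i => Hnonneg i w)).
have Emeas : ps_meas E.
  apply: meas_ext (meas_F Hmeas (fun g => phi [set i | ~~ g (i, j)] && ~~ phi [set i | g (j, i)])) _.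
  move=> w; rewrite HE.
  have -> : [set i | ~~ cmpv X w (i, j)] = [set i | ~~ Rltb (X i w) (X j w)]
    by apply/setP => i; rewrite !inE ffunE.
  have -> : [set i | cmpv X w (j, i)] = [set i | Rltb (X j w) (X i w)]
    by apply/setP => i; rewrite !inE ffunE.
  done.
set U := fun w => exists A, List.In A (Lset phi j) /\ Qev X j A w.
have Umeas : ps_meas U by apply: meas_list => A; exact: Qev_meas.
have UE : forall w, U w -> E w.
  move=> w [A [HA [H1 H2]]]; apply/HE.
  move/In_mem: HA; rewrite mem_filter => /andP [/andP [/andP [HjA Hp1] Hp2] _].
  have -> : [set i | ~~ Rltb (X i w) (X j w)] = j |: A.
    apply/setP => i; rewrite !inE.
    case: (eqVneq i j) => [->|Hij] /=; first by apply/RltbP; lra.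
    have Hij' : i <> j by apply/eqP.
    case HiA: (i \in A).
    - apply/RltbP; have := H2 i HiA; lra.
    - by apply/negP => /negP /RltbP; have := H1 i (negbT HiA) Hij'; lra.
  have -> : [set i | Rltb (X j w) (X i w)] = A.
    apply/setP => i; rewrite !inE.
    case HiA: (i \in A); first by apply/RltbP; exact: H2.
    case: (eqVneq i j) => [->|Hij]; first by apply/RltbP; lra.
    have Hij' : i <> j by apply/eqP.
    apply/RltbP; have := H1 i (negbT HiA) Hij'; lra.
  by rewrite Hp1 Hp2.
have EU : forall w, E w -> ~ U w -> ties_ev X w.
  move=> w Ew nU; apply: NNPP => nT; apply: nU.
  have dist : forall a b : 'I_n, a <> b -> X a w <> X b w.
    move=> a b Hab Heq; apply: nT; exists (a, b); split; first exact: In_enum.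
    by split.
  pose A := [set i | Rltb (X j w) (X i w)].
  move/HE: Ew => /andP [HG HH].
  have HjA : j \notin A by rewrite inE; apply/negP => /RltbP; lra.
  have HGA : [set i | ~~ Rltb (X i w) (X j w)] = j |: A.
    apply/setP => i; rewrite !inE.
    case: (eqVneq i j) => [->|Hij] /=; first by apply/negP => /RltbP; lra.
    have Hij' : i <> j by apply/eqP.
    have := dist i j Hij'.
    case: (RltbP (X i w) (X j w)); case: (RltbP (X j w) (X i w)) => //= ? ? ?; lra.
  exists A; split.
  - apply/In_mem; rewrite mem_filter mem_enum andbT HjA -HGA HG /=.
    exact: HH.
  - split.
    + move=> i; rewrite inE => /RltbP Hi Hij.
      have := dist i j Hij; lra.
    + by move=> i; rewrite inE => /RltbP.
have [Tnull Tmeas] := ties_null Hmeas Hnoties.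
have -> : I_BP X phi j = ps_P U + ps_P (fun w => E w /\ ~ U w).
  rewrite -P_add2 //; last 2 first.
  - exact: meas_inter Emeas (meas_compl Umeas).
  - by move=> w ? [].
  apply: P_ext => w; split; first by move=> Ew; case: (classic (U w)); tauto.
  case; [exact: UE | tauto].
have -> : ps_P (fun w => E w /\ ~ U w) = 0.
  apply: Rle_antisym; last exact: ps_P_nonneg (meas_inter Emeas (meas_compl Umeas)).
  rewrite -Tnull; apply: P_mono;
    [exact: meas_inter Emeas (meas_compl Umeas) | exact: Tmeas | move=> w [Ew nU]; exact: EU w Ew nU].
rewrite Rplus_0_r /U P_list_add.
- apply: eq_bigr => A _; rewrite /q_prob; done.
- by rewrite filter_uniq // enum_uniq.
- move=> A; exact: Qev_meas.
- move=> A B w; exact: Qev_disj.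
Qed.

Lemma Rplus_assoc' : associative Rplus. Proof. move=> *; ring. Qed.
Lemma Rplus_comm' : commutative Rplus. Proof. move=> *; ring. Qed.
Lemma Rplus_0_l' : left_id 0 Rplus. Proof. move=> *; ring. Qed.
HB.instance Definition _ := Monoid.isComLaw.Build R 0 Rplus Rplus_assoc' Rplus_comm' Rplus_0_l'.

Lemma enum_predT_idx (T : finType) : enum (@predT T) = index_enum T.
Proof. by rewrite -deprecated_filter_index_enum filter_predT. Qed.

Lemma sum_delta n (phi : {set 'I_n} -> bool) (Hs : semicoherent phi) (j : 'I_n) (f : {set 'I_n} -> R) :
  \big[Rplus/0]_(A : {set 'I_n} | j \notin A) (f A * (INR (phi (j |: A)) - INR (phi A))) =
  \big[Rplus/0]_(A <- Lset phi j) f A.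
Proof.
rewrite /Lset big_filter enum_predT_idx [RHS]big_mkcond [LHS]big_mkcond.
apply: eq_bigr => A _.
case: (boolP (j \notin A)) => HjA //=.
case: Hs => Hmono _.
have Hm := Hmono A (j |: A) (subsetUr _ _).
case: (phi A) Hm; case: (phi (j |: A)) => //= _; simpl; ring.
Qed.

Lemma sum_minus (I : Type) (r : seq I) (P : pred I) (F G : I -> R) :
  \big[Rplus/0]_(i <- r | P i) (F i - G i) =
  \big[Rplus/0]_(i <- r | P i) F i - \big[Rplus/0]_(i <- r | P i) G i.
Proof.
rewrite /Rminus big_split /=; congr Rplus.
apply: esym; apply: (big_morph Ropp); [move=> x y; ring | ring].
Qed.

Lemma sum_top n (j : 'I_n) (f : {set 'I_n} -> R) :
  \big[Rplus/0]_(A : {set 'I_n} | j \notin A)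
     (f A * (INR ([set: 'I_n] \subset (j |: A)) - INR ([set: 'I_n] \subset A))) = f (~: [set j]).
Proof.
have Htop : j \notin ~: [set j] by rewrite !inE eqxx.
rewrite (bigD1 (~: [set j])) //= big1.
- have -> : [set: 'I_n] \subset j |: ~: [set j].
    by apply/subsetP => i _; rewrite !inE; case: eqP.
  have -> : ([set: 'I_n] \subset ~: [set j]) = false.
    by apply/negP => /subsetP /(_ j); rewrite !inE eqxx => /(_ isT).
  simpl; ring.
- move=> A /andP [HjA HA].
  have -> : ([set: 'I_n] \subset A) = false.
    by apply/negP => /subsetP /(_ j (in_setT j)); apply/negP.
  have -> : ([set: 'I_n] \subset j |: A) = false.
    apply/negP => /subsetP H; move/negP: HA; apply; apply/eqP/setP => i.
    rewrite !inE; case: (eqVneq i j) => [->|Hij]; first by rewrite (negbTE HjA).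
    by have := H i (in_setT i); rewrite !inE (negbTE Hij).
  simpl; ring.
Qed.

Lemma coherent_top n (j : 'I_n) : coherent (fun A : {set 'I_n} => [set: 'I_n] \subset A).
Proof.
split; first split.
- move=> A B HAB; apply/implyP => H; exact: subset_trans H HAB.
- split; last exact: subxx.
  by apply/negP => /subsetP /(_ j (in_setT j)); rewrite inE.
- move=> i; exists [set: 'I_n].
  have -> : [set: 'I_n] \subset i |: [set: 'I_n] by apply/subsetP => k; rewrite !inE orbT.
  have -> : ([set: 'I_n] \subset [set: 'I_n] :\ i) = false.
    by apply/negP => /subsetP /(_ i (in_setT i)); rewrite !inE eqxx.
  done.
Qed.

Lemma setU1_in (T : finType) (a : T) (A : {set T}) : a \in A -> a |: A = A.
Proof. by move=> Ha; apply/setP => k; rewrite !inE; case: eqP => // ->. Qed.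

Definition psi n (B : {set 'I_n}) (A : {set 'I_n}) : bool := (B \subset A) || (~: B \subset A).

Lemma coherent_psi n (B : {set 'I_n}) (b1 b2 : 'I_n) : b1 \in B -> b2 \notin B -> coherent (psi B).
Proof.
move=> Hb1 Hb2.
have nsub0 : forall (D : {set 'I_n}) d, d \in D -> forall E : {set 'I_n}, d \notin E -> (D \subset E) = false.
  by move=> D d Hd E HE; apply/negP => /subsetP /(_ d Hd); apply/negP.
split; first split.
- move=> A A' HAA'; apply/implyP; rewrite /psi => /orP [H|H]; apply/orP; [left|right];
  exact: subset_trans H HAA'.
- split.
  + by rewrite /psi (nsub0 _ b1) ?inE // (nsub0 _ b2) ?inE.
  + by rewrite /psi subsetT.
- move=> i; case Hi: (i \in B).
  + exists B; rewrite /psi.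
    have e1 : (B \subset B :\ i) = false.
      by apply: (nsub0 B i Hi); rewrite !inE eqxx.
    have e2 : (~: B \subset B :\ i) = false.
      by apply: (nsub0 (~: B) b2); rewrite !inE ?Hb2 //; apply/negP => /andP [_ H]; move: H; apply/negP.
    by rewrite e1 e2 (setU1_in Hi) subxx.
  + exists (~: B); rewrite /psi.
    have e1 : (B \subset ~: B :\ i) = false.
      by apply: (nsub0 B b1 Hb1); rewrite !inE Hb1 andbF.
    have e2 : (~: B \subset ~: B :\ i) = false.
      by apply: (nsub0 (~: B) i); rewrite !inE ?Hi ?eqxx.
    have e3 : i \in ~: B by rewrite inE Hi.
    by rewrite e1 e2 (setU1_in e3) subxx orbT.
Qed.

Lemma delta_psi n (j : 'I_n) (C A : {set 'I_n}) : j \notin C -> j \notin A ->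
  INR (psi (j |: C) (j |: A)) - INR (psi (j |: C) A) = INR (C \subset A) - INR (A == ~: [set j]).
Proof.
move=> HjC HjA; rewrite /psi.
have e1 : (j |: C \subset A) = false.
  by apply/negP => /subsetP /(_ j); rewrite !inE eqxx => /(_ isT); apply/negP.
have e2 : (j |: C \subset j |: A) = (C \subset A).
  apply/idP/idP.
  - move/subsetP => H; apply/subsetP => i iC.
    have := H i; rewrite !inE iC orbT => /(_ isT) /orP [/eqP Eij|//].
    by move: HjC; rewrite -Eij iC.
  - by move=> H; apply: setUS.
have e3 : (~: (j |: C) \subset j |: A) = (~: (j |: C) \subset A).
  apply/idP/idP.
  - move/subsetP => H; apply/subsetP => i iC.
    have := H i iC; move: iC; rewrite !inE negb_or => /andP [Hij _] /orP [/eqP Eij|//].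
    by rewrite Eij eqxx in Hij.
  - by move=> H; apply: subset_trans H (subsetUr _ _).
have e4 : (C \subset A) && (~: (j |: C) \subset A) = (A == ~: [set j]).
  apply/idP/idP.
  - case/andP => /subsetP H1 /subsetP H2; apply/eqP/setP => i; rewrite !inE.
    case: (eqVneq i j) => [->|Hij] /=; first exact: negbTE.
    case HiC: (i \in C); first exact: H1.
    by apply: H2; rewrite !inE negb_or Hij HiC.
  - move/eqP => ->; apply/andP; split; apply/subsetP => i; rewrite !inE.
    + by move=> Hi; apply/negP => /eqP Eij; move: HjC; rewrite -Eij Hi.
    + by rewrite negb_or => /andP [].
rewrite e1 e2 e3 -e4 /=.
case: (C \subset A); case: (~: (j |: C) \subset A) => /=; ring.
Qed.

Lemma sum_psi n (j : 'I_n) (C : {set 'I_n}) (f : {set 'I_n} -> R) : j \notin C ->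
  \big[Rplus/0]_(A : {set 'I_n} | j \notin A)
     (f A * (INR (psi (j |: C) (j |: A)) - INR (psi (j |: C) A))) =
  \big[Rplus/0]_(A : {set 'I_n} | (j \notin A) && (C \subset A)) f A - f (~: [set j]).
Proof.
move=> HjC.
rewrite (eq_bigr (fun A => f A * INR (C \subset A) - f A * INR (A == ~: [set j]))); last first.
  move=> A HjA; rewrite delta_psi //; ring.
rewrite sum_minus; congr Rminus.
- rewrite big_mkcond [RHS]big_mkcond; apply: eq_bigr => A _.
  case: (j \notin A); case: (C \subset A) => /=; ring.
- have Htop : j \notin ~: [set j] by rewrite !inE eqxx.
  rewrite (bigD1 (~: [set j])) //= big1; first by rewrite eqxx /=; ring.
  move=> A /andP [_ HA]; rewrite (negbTE HA) /=; ring.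
Qed.

Lemma c2b (Om : ProbSpace) n (X : 'I_n -> Om -> R)
  (Hmeas : forall (i : 'I_n) (t : R), @ps_meas Om (fun w => (X i w <= t)%R))
  (Hnonneg : forall (i : 'I_n) (w : Om), (0 <= X i w)%R)
  (Hnoties : forall i k : 'I_n, i <> k -> @ps_P Om (fun w => X i w = X k w) = 0%R) :
  (forall (j : 'I_n) (A : {set 'I_n}), j \notin A -> q_prob X j A = sweight A) ->
  forall phi : {set 'I_n} -> bool, semicoherent phi ->
    forall j : 'I_n, I_BP X phi j = shapley phi j.
Proof.
move=> Hc phi Hs j.
rewrite (key Hmeas Hnonneg Hnoties Hs) -(sum_delta Hs j (q_prob X j)) /shapley.
by apply: eq_bigr => A HjA; rewrite Hc.
Qed.

Local Close Scope R_scope.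

Lemma a2c (Om : ProbSpace) n (X : 'I_n -> Om -> R)
  (Hmeas : forall (i : 'I_n) (t : R), @ps_meas Om (fun w => (X i w <= t)%R))
  (Hnonneg : forall (i : 'I_n) (w : Om), (0 <= X i w)%R)
  (Hnoties : forall i k : 'I_n, i <> k -> @ps_P Om (fun w => X i w = X k w) = 0%R) :
  (forall phi : {set 'I_n} -> bool, coherent phi ->
    forall j : 'I_n, I_BP X phi j = shapley phi j) ->
  (forall (j : 'I_n) (A : {set 'I_n}), j \notin A -> q_prob X j A = sweight A).
Proof.
move=> Ha j.
have Heq : forall phi, coherent phi ->
  \big[Rplus/0%R]_(A : {set 'I_n} | j \notin A) (q_prob X j A * (INR (phi (j |: A)) - INR (phi A)))%R =
  \big[Rplus/0%R]_(A : {set 'I_n} | j \notin A) (sweight A * (INR (phi (j |: A)) - INR (phi A)))%R.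
  move=> phi Hc; rewrite (sum_delta Hc.1 j (q_prob X j)) -(key Hmeas Hnonneg Hnoties Hc.1).
  exact: Ha.
set top := ~: [set j].
have Htop : q_prob X j top = sweight top.
  have := Heq _ (coherent_top j); rewrite !sum_top; done.
have HS : forall C : {set 'I_n}, j \notin C -> C != top ->
  \big[Rplus/0%R]_(A : {set 'I_n} | (j \notin A) && (C \subset A)) q_prob X j A =
  \big[Rplus/0%R]_(A : {set 'I_n} | (j \notin A) && (C \subset A)) sweight A.
  move=> C HjC HCt.
  case: (pickP (fun i => i \notin j |: C)) => [b2 Hb2 | Hall]; last first.
    exfalso; move/negP: HCt; apply; apply/eqP/setP => i; rewrite !inE.
    have := Hall i; rewrite /= !inE negb_or.
    case: (eqVneq i j) => [->|Hij] /=; first by rewrite (negbTE HjC).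
    by case: (i \in C).
  have Hc := coherent_psi (setU11 j C) Hb2.
  have := Heq _ Hc; rewrite !sum_psi // -/top Htop; lra.
have cardC : forall C : {set 'I_n}, j \notin C -> (#|C| < n)%N.
  move=> C HjC.
  have HP : C \proper [set: 'I_n].
    rewrite properEneq subsetT andbT.
    by apply/negP => /eqP HC; move: HjC; rewrite HC inE.
  by have := proper_card HP; rewrite cardsT card_ord.
suff H : forall k (C : {set 'I_n}), j \notin C -> (n - #|C| <= k)%N -> q_prob X j C = sweight C.
  move=> A HjA; exact: H (n - #|A|)%N A HjA (leqnn _).
elim=> [|k IH] C HjC Hk.
  by have := cardC C HjC; rewrite -subn_gt0 lt0n; move: Hk; rewrite leqn0 => ->.
case: (eqVneq C top) => [->|HCt]; first exact: Htop.
have := HS C HjC HCt.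
rewrite (bigD1 C) ?HjC ?subxx //= [X in _ = X](bigD1 C) ?HjC ?subxx //=.
rewrite (eq_bigr (fun A => sweight A)); first lra.
move=> A /andP [/andP [HjA HCA] HAC].
apply: IH => //.
have HCA' : (#|C| < #|A|)%N by apply: proper_card; rewrite properEneq eq_sym HAC.
have := cardC A HjA.
move: Hk HCA'; clear; move=> Hk HCA' HAn.
rewrite leq_subLR; rewrite leq_subLR in Hk.
by apply: leq_trans Hk _; rewrite addnS -addSn leq_add2r.
Qed.

Theorem proposition9 (Om : ProbSpace) (n : nat) (X : 'I_n -> Om -> R)
  (Hn : (1 <= n)%N)
  (Hmeas : forall (i : 'I_n) (t : R), @ps_meas Om (fun w => (X i w <= t)%R))
  (Hnonneg : forall (i : 'I_n) (w : Om), (0 <= X i w)%R)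
  (Hnoties : forall i k : 'I_n, i <> k -> @ps_P Om (fun w => X i w = X k w) = 0%R) :
  [<-> (forall phi : {set 'I_n} -> bool, coherent phi ->
          forall j : 'I_n, I_BP X phi j = shapley phi j);
       (forall phi : {set 'I_n} -> bool, semicoherent phi ->
          forall j : 'I_n, I_BP X phi j = shapley phi j);
       (forall (j : 'I_n) (A : {set 'I_n}), j \notin A ->
          q_prob X j A = sweight A)].
Proof.
have hc2b := c2b Hmeas Hnonneg Hnoties.
have ha2c := a2c Hmeas Hnonneg Hnoties.
tfae.
- move=> H; apply: hc2b; exact: ha2c H.
- move=> H; apply: ha2c => phi Hc; exact: H phi Hc.1.
- move=> H phi Hc; exact: hc2b H phi Hc.1.
Qed.
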